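(* Let $n\ge3$ be odd. Then $\lambda$ is an eigenvalue of $C_n$ if and only if $-\lambda$ is an eigenvalue of $C_n^{=}$.
   Context: A mixed graph is obtained from a finite simple graph by orienting some of its edges. With $\omega=\frac{1+\mathbf{i}\sqrt3}{2}$, the matrix $N$ has $(u,v)$-entry $\omega$ if $\overrightarrow{uv}$ is an arc, $\bar\omega$ if $\overrightarrow{vu}$ is an arc, $1$ for an undirected edge, $0$ otherwise; eigenvalues of a mixed graph are those of $N$. $C_n$ is the undirected $n$-cycle (whose $N$ is its ordinary adjacency matrix). $C_n^{=}$ is the mixed cycle $v_1v_2\cdots v_nv_1$ with arcs $\overrightarrow{v_1v_2},\overrightarrow{v_2v_3},\overrightarrow{v_3v_4}$ (indices mod $n$) and all other edges undirected. *)

(* Defs.v *)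
From HB Require Import structures.
From mathcomp Require Import all_boot all_order all_algebra all_field.
Set Implicit Arguments. Unset Strict Implicit. Unset Printing Implicit Defensive.
Import Order.TTheory GRing.Theory Num.Theory.
Local Open Scope ring_scope.

Definition omega : algC := (1 + 'i * sqrtC 3) / 2.

(* The matrix N of a mixed graph on vertex set 'I_n, given the undirected
   edge relation [und] (assumed symmetric) and the arc relation [arc]
   ([arc u v] means the arc u -> v). *)
Definition mixedN (n : nat) (und arc : rel 'I_n) : 'M[algC]_n :=
  \matrix_(u, v)
    if arc u v then omega
    else if arc v u then omega^*
    else if und u v then 1 else 0.

(* adjacency in the cycle v_0 v_1 ... v_{n-1} v_0 (vertex v_{k+1} of the
   paper is index k) *)
Definition cyc_adj (n : nat) : rel 'I_n :=
  fun u v => (v == (u.+1 %% n)%N :> nat) || (u == (v.+1 %% n)%N :> nat).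

Definition Cn_mx (n : nat) : 'M[algC]_n :=
  mixedN (@cyc_adj n) (fun _ _ => false).

(* arcs v1->v2, v2->v3, v3->v4 (indices mod n), i.e. k -> k+1 mod n for k<3 *)
Definition Ceq_arc (n : nat) : rel 'I_n :=
  fun u v => (u < 3)%N && (v == (u.+1 %% n)%N :> nat).

Definition Ceq_mx (n : nat) : 'M[algC]_n :=
  mixedN (fun u v => @cyc_adj n u v && ~~ @Ceq_arc n u v && ~~ @Ceq_arc n v u)
         (@Ceq_arc n).

(* Main.v *)
Require Import Defs.
From mathcomp Require Import all_boot all_order all_algebra all_field.
From mathcomp Require Import zify ring.
Import Order.TTheory GRing.Theory Num.Theory.
Local Open Scope ring_scope.

Lemma cjM (a b : algC) : (a * b)^* = a^* * b^*. Proof. exact: rmorphM. Qed.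
Lemma cjD (a b : algC) : (a + b)^* = a^* + b^*. Proof. exact: rmorphD. Qed.
Lemma cjV (a : algC) : (a^-1)^* = (a^*)^-1. Proof. exact: fmorphV. Qed.
Lemma cj1 : (1 : algC)^* = 1. Proof. exact: rmorph1. Qed.
Lemma cjn k : (k%:R : algC)^* = k%:R. Proof. exact: rmorph_nat. Qed.
Lemma cji : ('i : algC)^* = - 'i. Proof. exact: conjCi. Qed.
Lemma cjs : (sqrtC 3 : algC)^* = sqrtC 3.
Proof. by apply: geC0_conj; rewrite sqrtC_ge0 ler0n. Qed.

Lemma omega_conj : omega^* = 1 - omega.
Proof.
rewrite /omega cjM cjD cjM cjV cj1 cjn cji cjs.
by field.
Qed.

Lemma omega2 : omega ^+ 2 = omega - 1.
Proof.
rewrite /omega. have h3 := sqrtCK 3. have hi := sqrCi.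
apply: (@mulfI _ 4); first by rewrite pnatr_eq0.
rewrite expr2. 
have -> : 4 * ((1 + 'i * sqrtC 3) / 2 * ((1 + 'i * sqrtC 3) / 2)) = 1 + 2 * 'i * sqrtC 3 + ('i ^+2) * (sqrtC 3 ^+ 2) :> algC.
  by field.
rewrite h3 hi. by field.
Qed.

Lemma omega3 : omega ^+ 3 = -1.
Proof. rewrite exprS omega2 mulrBr mulr1 -expr2 omega2; ring. Qed.

Lemma omega_cjM : omega * omega^* = 1.
Proof. rewrite omega_conj mulrBr mulr1 -expr2 omega2; ring. Qed.
Definition dn (k : nat) : algC := (-1) ^+ k * omega ^+ (minn k 3).

Lemma modS n u : (u < n)%N -> (u.+1 = n /\ (u.+1 %% n = 0)%N) \/ (u.+1 < n /\ u.+1 %% n = u.+1)%N.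
Proof.
move=> hu; case: (ltngtP u.+1 n) => h; [right|lia|left]; split => //.
  by rewrite modn_small.
by rewrite h modnn.
Qed.

Arguments modS {n u}.

Lemma fwd n u : (3 <= n)%N -> odd n -> (u < n)%N ->
  dn u * (if (u < 3)%N then omega else 1) = - dn (u.+1 %% n).
Proof.
move=> hn ho hu; have [[Eu ->]|[Eu ->]] := modS hu.
  case: ltnP => hu3.
    have -> : u = 2%N by lia.
    by rewrite /dn /minn /= -mulrA -exprSr omega3; ring.
  rewrite /dn (elimT minn_idPr hu3) mulr1 -signr_odd.
  have -> : odd u = false by move: ho; rewrite -Eu /=; case: (odd u).
  rewrite omega3 /minn /=; ring.
case: ltnP => hu3.
  by case: u hu Eu hu3 => [|[|[|u]]] //= *; rewrite /dn /minn /=; ring.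
rewrite /dn (elimT minn_idPr hu3) (elimT minn_idPr (leqW hu3)) [(-1) ^+ u.+1]exprS; ring.
Qed.

Arguments fwd {n u}.

Lemma key n (hn : (3 <= n)%N) (ho : odd n) (u v : 'I_n) :
  dn u * Ceq_mx n u v = - Cn_mx n u v * dn v.
Proof.
rewrite /Ceq_mx /Cn_mx /mixedN !mxE /Ceq_arc /cyc_adj.
case: u v => u hu [v hv] /=.
case: eqP => E1; case: eqP => E2.
- by exfalso; have := modS hu; have := modS hv; lia.
- rewrite E1 !andbT !andbF /= mulN1r -fwd //; case: ltnP => //= _; ring.
- rewrite !andbT !andbF /= mulN1r; have := fwd hn ho hv; rewrite -E2 => h.
  rewrite -[dn u]opprK -h; case: ltnP => //= _; last by rewrite !mulr1.
  by rewrite mulNr -mulrA omega_cjM mulr1.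
- by rewrite /= !andbF /= mulr0 oppr0 mul0r.
Qed.

Arguments key {n}.

Lemma omega_neq0 : omega != 0.
Proof. apply/eqP => h; have := omega3; rewrite h expr0n /= => /eqP; rewrite eq_sym oppr_eq0 oner_eq0. done. Qed.

Lemma dn_neq0 k : dn k != 0.
Proof. by rewrite /dn mulf_neq0 ?expf_neq0 ?omega_neq0 // oppr_eq0 oner_eq0. Qed.

Lemma diag_eq0 n (x : 'rV[algC]_n) (f : 'rV[algC]_n) :
  (forall j, f 0 j != 0) -> (x *m diag_mx f == 0) = (x == 0).
Proof.
move=> hf; apply/eqP/eqP => [h|->]; last by rewrite mul0mx.
apply/matrixP => i j; have := congr1 (fun M : 'M_(1,n) => M i j) h.
rewrite mul_mx_diag !mxE => /eqP; rewrite mulf_eq0 (negbTE (hf j)) orbF => /eqP.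
by [].
Qed.

Theorem lemma6p9 (n : nat) (hn : (3 <= n)%N) (hodd : odd n) (lambda : algC) :
  eigenvalue (Cn_mx n) lambda <-> eigenvalue (Ceq_mx n) (- lambda).
Proof.
set d : 'rV[algC]_n := \row_(i < n) dn i.
set e : 'rV[algC]_n := \row_(i < n) (dn i)^-1.
have hd j : d 0 j != 0 by rewrite mxE dn_neq0.
have he j : e 0 j != 0 by rewrite mxE invr_eq0 dn_neq0.
have A : diag_mx d *m Ceq_mx n = - (Cn_mx n *m diag_mx d).
  apply/matrixP => u v; rewrite mul_diag_mx mul_mx_diag !mxE.
  rewrite -mulNr; have := key hn hodd u v; rewrite /Ceq_mx /Cn_mx /mixedN !mxE => ->.
  by rewrite mulNr.
have B : diag_mx e *m Cn_mx n = - (Ceq_mx n *m diag_mx e).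
  apply/matrixP => u v; rewrite mul_diag_mx mul_mx_diag. rewrite [LHS]mxE [RHS]mxE [in RHS]mxE. rewrite ![e _ _]mxE.
  have -> : Cn_mx n u v = - (dn u * Ceq_mx n u v) / dn v.
    by rewrite key //; field; rewrite dn_neq0.
  have := dn_neq0 u; have := dn_neq0 v => h1 h2.
  by field; rewrite h1 h2.
split.
- move/eigenvalueP => [x hx nz]; apply/eigenvalueP; exists (x *m diag_mx d).
    by rewrite -mulmxA A mulmxN mulmxA hx scaleNr -scalemxAl.
  by rewrite diag_eq0.
- move/eigenvalueP => [x hx nz]; apply/eigenvalueP; exists (x *m diag_mx e).
    by rewrite -mulmxA B mulmxN mulmxA hx scalemxAl scaleNr mulNmx opprK.
  by rewrite diag_eq0.
Qed.
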